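(* Let $A$ be a finite-dimensional unital algebra over a field of characteristic $0$, let $a\in\mathrm{LN_{alt}}(A)$, and let $L_a=(L_a)_s+(L_a)_n$ be the Jordan–Chevalley decomposition of $L_a$ in $\mathrm{End}(A)$ (semisimple plus nilpotent, commuting). Then there exist $a_s,a_n\in\mathrm{LN_{alt}}(A)$ such that $(L_a)_s=L_{a_s}$ and $(L_a)_n=L_{a_n}$.
   Context: Algebras are not necessarily associative; $(x,y,z)=(xy)z-x(yz)$ is the associator and $L_x$ is left multiplication by $x$. $\mathrm{LN_{alt}}(A)=\{a\in A:(a,x,y)=-(x,a,y)\ \forall x,y\in A\}$. *)

(* Defs.v *)
From HB Require Import structures.
From mathcomp Require Import all_boot all_order all_algebra all_field.
Set Implicit Arguments. Unset Strict Implicit. Unset Printing Implicit Defensive.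
Import GRing.Theory.
Local Open Scope ring_scope.

(* A finite-dimensional (not necessarily associative) algebra over F is
   modelled as the coordinate space 'rV[F]_n with a bilinear product mul. *)

Definition bilinear_mul (F : fieldType) (n : nat)
    (mul : 'rV[F]_n -> 'rV[F]_n -> 'rV[F]_n) : Prop :=
  (forall (c : F) x y z, mul (c *: x + y) z = c *: mul x z + mul y z) /\
  (forall (c : F) x y z, mul z (c *: x + y) = c *: mul z x + mul z y).

Definition unital_mul (F : fieldType) (n : nat)
    (mul : 'rV[F]_n -> 'rV[F]_n -> 'rV[F]_n) : Prop :=
  exists e, forall x, mul e x = x /\ mul x e = x.

Definition assoc (F : fieldType) (n : nat)
    (mul : 'rV[F]_n -> 'rV[F]_n -> 'rV[F]_n) x y z :=
  mul (mul x y) z - mul x (mul y z).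

Definition LN_alt (F : fieldType) (n : nat)
    (mul : 'rV[F]_n -> 'rV[F]_n -> 'rV[F]_n) (a : 'rV[F]_n) : Prop :=
  forall x y, assoc mul a x y = - assoc mul x a y.

(* matrix of left multiplication L_a (row-vector convention: x *m Lmx a = a x) *)
Definition Lmx (F : fieldType) (n : nat)
    (mul : 'rV[F]_n -> 'rV[F]_n -> 'rV[F]_n) (a : 'rV[F]_n) : 'M[F]_n :=
  lin1_mx (mul a).

Definition mx_semisimple (F : fieldType) (n : nat) (M : 'M[F]_n.+1) : Prop :=
  separable.separable_poly (mxminpoly M).

Definition mx_nilpotent (F : fieldType) (n : nat) (M : 'M[F]_n.+1) : Prop :=
  exists k : nat, M ^+ k = 0.

(* Main.v *)
Require Import Defs.
From HB Require Import structures.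
From mathcomp Require Import all_boot all_order all_algebra all_field ssrAC.
From Stdlib Require Import Classical.
Import GRing.Theory.
Local Open Scope ring_scope.

Section Newton.
Variables (F : fieldType) (k : nat) (D E : 'M[F]_k.+1).
Hypothesis DE : GRing.comm D E.

Definition bic (X : 'M[F]_k.+1) :=
  forall C : 'M[F]_k.+1, GRing.comm C D -> GRing.comm C E -> GRing.comm C X.

Lemma bicD : bic D. Proof. by move=> C. Qed.
Lemma bicE : bic E. Proof. by move=> C. Qed.
Lemma bic_add X Y : bic X -> bic Y -> bic (X + Y).
Proof. by move=> hX hY C c1 c2; apply: commrD; [apply: hX|apply: hY]. Qed.
Lemma bic_mul {X Y : 'M[F]_k.+1} : bic X -> bic Y -> bic (X * Y).
Proof. by move=> hX hY C c1 c2; apply: commrM; [apply: hX|apply: hY]. Qed.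
Lemma bic_opp X : bic X -> bic (- X).
Proof. by move=> hX C c1 c2; apply: commrN; apply: hX. Qed.
Lemma bic_scal (c : F) : bic c%:M.
Proof. by move=> C _ _; exact: scalar_mxC. Qed.
Lemma bic_comm {X Y : 'M[F]_k.+1} : bic X -> bic Y -> GRing.comm X Y.
Proof.
move=> hX hY; apply: commr_sym; apply: hX.
  by apply: commr_sym; apply: hY => //; apply: commr_sym.
by apply: commr_sym; apply: hY => //; apply: commr_sym.
Qed.
Lemma bic_exp {X : 'M[F]_k.+1} n : bic X -> bic (X ^+ n).
Proof. by move=> hX C c1 c2; apply: commrX; apply: hX. Qed.
Lemma bic_horner X p : bic X -> bic (horner_mx X p).
Proof.
move=> hX; elim/poly_ind: p => [|p c IH].
  by rewrite rmorph0; move=> C _ _; apply: commr0.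
rewrite rmorphD rmorphM /= horner_mx_X horner_mx_C.
by apply: bic_add; [apply: bic_mul|apply: bic_scal].
Qed.

Lemma taylor (p : {poly F}) A B : bic A -> bic B ->
  exists R, bic R /\
  horner_mx (A + B) p = horner_mx A p + horner_mx A p^`() * B + B * B * R.
Proof.
move=> hA hB; elim/poly_ind: p => [|p c [R [hR IH]]].
  exists 0; split; first by move=> C _ _; apply: commr0.
  by rewrite deriv0 !rmorph0 !mulr0 mul0r !addr0.
set a := horner_mx A p; set a' := horner_mx A p^`().
have ha : bic a by apply: bic_horner.
have ha' : bic a' by apply: bic_horner.
exists (a' + R * (A + B)); split.
  by apply: bic_add => //; apply: bic_mul => //; apply: bic_add.
rewrite derivMXaddC !rmorphD !rmorphM /= !horner_mx_X !horner_mx_C IH -/a -/a'.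
have cBA : GRing.comm B A by apply: bic_comm.
have cBa' : GRing.comm a' B by apply: bic_comm.
rewrite !mulrDr !mulrDl !mulrA.
rewrite -(mulrA a' B A) cBA (mulrA a' A B).
rewrite cBa' -(mulrA B a' B) cBa' !mulrA.
by rewrite (AC ((3*3)*1) (((1*7)*(4*2))*(5*(3*6)))).
Qed.

Lemma horner_comp (p q : {poly F}) (X : 'M[F]_k.+1) :
  horner_mx X (p \Po q) = horner_mx (horner_mx X q) p.
Proof.
elim/poly_ind: p => [|p c IH]; first by rewrite comp_poly0 !rmorph0.
by rewrite comp_poly_MXaddC !rmorphD !rmorphM /= IH !horner_mx_C horner_mx_X.
Qed.

Lemma newton_step (g v : {poly F}) (q : {poly F}) (W : 'M[F]_k.+1) j :
  horner_mx D g = 0 -> horner_mx D v * horner_mx D g^`() = 1 ->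
  bic W -> horner_mx (D + E) q = D + E ^+ (2 ^ j) * W ->
  exists q' W', bic W' /\ horner_mx (D + E) q' = D + E ^+ (2 ^ j.+1) * W'.
Proof.
move=> gD vg hW Hq.
set eps := E ^+ (2 ^ j) * W.
have heps : bic eps by apply: bic_mul => //; apply: bic_exp; apply: bicE.
have e4 : eps * eps = E ^+ (2 ^ j.+1) * (W * W).
  rewrite /eps expnS mul2n -addnn exprD -!mulrA; congr (_ * _).
  by rewrite mulrA (bic_comm hW (bic_exp (2 ^ j) bicE)) -mulrA.
rewrite -/eps in Hq; clearbody eps.
have [R1 [hR1 T1]] := @taylor g _ _ bicD heps.
have [R2 [hR2 T2]] := @taylor v _ _ bicD heps.
set vD := horner_mx D v in vg T2; set gD' := horner_mx D g^`() in vg T1.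
set vD' := horner_mx D v^`() in T2.
have hvD : bic vD by apply: bic_horner; apply: bicD.
have hgD' : bic gD' by apply: bic_horner; apply: bicD.
have hvD' : bic vD' by apply: bic_horner; apply: bicD.
set Y := vD' + eps * R2.
have hY : bic Y by apply: bic_add => //; apply: bic_mul.
set Z := vD * R1 + Y * gD' + Y * eps * R1.
have hZ : bic Z.
  by apply: bic_add; [apply: bic_add|]; apply: bic_mul => //; apply: bic_mul.
exists (q - (v \Po q) * (g \Po q)), (- (W * W * Z)); split.
  by apply: bic_opp; apply: bic_mul => //; apply: bic_mul.
rewrite rmorphB rmorphM /= !horner_comp Hq T1 T2 gD add0r.
have e1 : vD' * eps = eps * vD' by apply: bic_comm.
have e2 : vD + vD' * eps + eps * eps * R2 = vD + eps * Y.
  by rewrite /Y mulrDr e1 mulrA addrA.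
rewrite e2.
clearbody Y.
have e3 : (vD + eps * Y) * (gD' * eps + eps * eps * R1) = eps + eps * eps * Z.
  rewrite mulrDl (mulrDr vD) (mulrDr (eps * Y)) mulrA vg mul1r -!addrA.
  congr (_ + _).
  rewrite /Z (mulrDr (eps * eps)) (mulrDr (eps * eps)) -!addrA; congr (_ + _).
    by rewrite mulrA (bic_comm hvD (bic_mul heps heps)) -!mulrA.
  congr (_ + _).
    rewrite -!mulrA; congr (_ * _); rewrite mulrA.
    exact: (bic_comm (bic_mul hY hgD') heps).
  rewrite -!mulrA; congr (_ * _); rewrite !mulrA.
  by rewrite (bic_comm hY heps).
rewrite e3 opprD addrA addrK.
by rewrite e4 mulrN -!mulrA.
Qed.

Lemma newton (g : {poly F}) m : separable_poly g -> horner_mx D g = 0 ->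
  E ^+ m = 0 -> exists q, horner_mx (D + E) q = D.
Proof.
move=> sg gD Em.
have := sg; rewrite unlock => /Bezout_eq1_coprimepP [[u v] /= Huv].
have vg : horner_mx D v * horner_mx D g^`() = 1.
  have := congr1 (horner_mx D) Huv.
  by rewrite rmorphD !rmorphM /= gD mulr0 add0r rmorph1.
have inv : forall j, exists q W, bic W /\ horner_mx (D + E) q = D + E ^+ (2 ^ j) * W.
  elim=> [|j [q [W [hW Hq]]]].
    exists 'X, 1; split; first exact: (bic_scal 1).
    by rewrite horner_mx_X expn0 expr1 mulr1.
  exact: newton_step gD vg hW Hq.
have [q [W [_ Hq]]] := inv m.
exists q; rewrite Hq.
have -> : E ^+ (2 ^ m) = 0.
  have lem : (m <= 2 ^ m)%N by apply: ltnW; apply: ltn_expl.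
  by rewrite -(subnKC lem) exprD Em mul0r.
by rewrite mul0r addr0.
Qed.
End Newton.

Lemma irr_factor (F : fieldType) n (p : {poly F}) : (size p <= n)%N -> (1 < size p)%N ->
  exists q, exists _ : monic_irreducible_poly q, q %| p.
Proof.
elim: n p => [|n IH] p sp sp1; first by rewrite leqNgt (leq_trans _ sp1) in sp.
have p0 : p != 0 by rewrite -size_poly_gt0 (ltn_trans _ sp1).
case: (classic (forall q : {poly F}, size q != 1 -> q %| p -> q %= p)) => [H|].
  have lc0 : lead_coef p != 0 by rewrite lead_coef_eq0.
  exists ((lead_coef p)^-1 *: p).
  have hm : (lead_coef p)^-1 *: p \is monic.
    by rewrite monicE lead_coefZ mulVf.
  have hirr : irreducible_poly ((lead_coef p)^-1 *: p).
    split; first by rewrite size_scale ?invr_eq0.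
    move=> q sq qd; rewrite eqp_sym (eqp_trans (eqp_scale _ _)) ?invr_eq0 // eqp_sym.
    by apply: H => //; rewrite -(dvdpZr _ _ (invr_neq0 lc0)).
  by exists (hirr, hm); rewrite dvdpZl ?invr_eq0.
move=> nH; have [q nq] := not_all_ex_not _ _ nH; have [sq nq2] := imply_to_and _ _ nq; have [qd nqp] := imply_to_and _ _ nq2.
have q0 : q != 0 by apply: contraNneq p0 => q0; move: qd; rewrite q0 dvd0p.
have sq1 : (1 < size q)%N.
  by rewrite ltn_neqAle eq_sym sq /= size_poly_gt0.
have sqp : (size q < size p)%N.
  rewrite ltn_neqAle dvdp_leq // andbT dvdp_size_eqp //.
  by apply/negP => e; apply: nqp.
have sqn : (size q <= n)%N by rewrite -ltnS (leq_trans sqp sp).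
have [r [hr rq]] := IH q sqn sq1.
by exists r, hr; apply: dvdp_trans qd.
Qed.

Lemma qroot (F : fieldType) (q : {poly F}) (hI : monic_irreducible_poly q) :
  root (map_poly (qfpoly_const hI) q) (in_qpoly q 'X : {poly %/ q with hI}).
Proof.
apply/eqP.
have := in_qpoly_comp_horner q q 'X.
rewrite comp_polyXr => <-.
apply: val_inj => /=.
rewrite (mk_monicE hI); apply: Pdiv.Ring.rmodpp; exact: mulrC.
Qed.

Lemma split_ex_n n (F : fieldType) (p : {poly F}) : (size p <= n)%N -> p != 0 ->
  exists (L : fieldType) (f : {rmorphism F -> L}) (rs : seq L),
    map_poly f p %| \prod_(z <- rs) ('X - z%:P).
Proof.
elim: n F p => [|n IH] F p sp p0.
  by move: sp; rewrite leqn0 size_poly_eq0 (negPf p0).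
case: (leqP (size p) 1) => sp1.
  exists F, idfun, [::]; rewrite big_nil map_poly_id //.
  have /size_poly1P [c c0 ->] : size p == 1%N.
    by rewrite eqn_leq sp1 size_poly_gt0.
  by rewrite dvdp1 size_polyC c0.
have [q [hI qp]] := @irr_factor F _ p (leqnn _) sp1.
pose K : fieldType := ({poly %/ q with hI} : fieldType).
set f0 : {rmorphism F -> K} := qfpoly_const hI.
set z : K := in_qpoly q 'X.
have rz : root (map_poly f0 p) z.
  have := @qroot F q hI; rewrite -/z -/f0 -!dvdp_XsubCl => h.
  by apply: dvdp_trans h _; rewrite dvdp_map.
set p1 := map_poly f0 p %/ ('X - z%:P).
have Dp : map_poly f0 p = p1 * ('X - z%:P).
  by rewrite divpK // dvdp_XsubCl.
have p10 : p1 != 0.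
  by apply: contra_neq p0 => e; apply/eqP; rewrite -(map_poly_eq0 f0) Dp e mul0r.
have sp10 : (size p1 <= n)%N.
  have := size_map_poly f0 p; rewrite Dp size_Mmonic ?monicXsubC // size_XsubC addn2 /= => e.
  by rewrite -ltnS e.
have [L [f1 [rs Hrs]]] := IH K p1 sp10 p10.
exists L, (f1 \o f0), (f1 z :: rs).
rewrite map_poly_comp Dp rmorphM /= map_polyXsubC big_cons mulrC.
by rewrite dvdp_mul2l ?polyXsubC_eq0.
Qed.

Lemma diag_of (F L : fieldType) (f : {rmorphism F -> L}) k (A : 'M[F]_k.+1)
  (g : {poly F}) (rs : seq L) :
  separable_poly g -> horner_mx A g = 0 -> map_poly f g %| \prod_(z <- rs) ('X - z%:P) ->
  exists2 V : 'M[L]_k.+1, V \in unitmx & similar_diag V (map_mx f A).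
Proof.
move=> sg Ag grs.
have mg : mxminpoly A %| g by apply: mxminpoly_min.
have mrs : mxminpoly (map_mx f A) %| \prod_(z <- rs) ('X - z%:P).
  by rewrite mxminpoly_map; apply: dvdp_trans grs; rewrite dvdp_map.
have sm : separable_poly (mxminpoly (map_mx f A)).
  by rewrite mxminpoly_map separable_map; apply: dvdp_separable sg.
have [m Hm] := @dvdp_prod_XsubC _ _ rs id _ mrs.
apply/diagonalizableP; exists (mask m rs).
  by rewrite -separable_prod_XsubC -(eqp_separable Hm).
by rewrite (eqp_dvdl _ Hm).
Qed.

Lemma ss_sum (F : fieldType) k (P Q : 'M[F]_k.+1) (g h : {poly F}) :
  GRing.comm P Q -> separable_poly g -> separable_poly h ->
  horner_mx P g = 0 -> horner_mx Q h = 0 -> separable_poly (mxminpoly (P + Q)).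
Proof.
move=> PQ sg sh Pg Qh.
have gh0 : g * h != 0 by rewrite mulf_neq0 // separable_poly_neq0.
have [L [f [rs Hrs]]] := @split_ex_n _ F (g * h) (leqnn _) gh0.
have [V1 V1u dP] : exists2 V : 'M[L]_k.+1, V \in unitmx & similar_diag V (map_mx f P).
  apply: diag_of sg Pg _; apply: dvdp_trans Hrs; by rewrite rmorphM /= dvdp_mulr.
have [V2 V2u dQ] : exists2 V : 'M[L]_k.+1, V \in unitmx & similar_diag V (map_mx f Q).
  apply: diag_of sh Qh _; apply: dvdp_trans Hrs; by rewrite rmorphM /= dvdp_mull.
have cd : codiagonalizable [:: map_mx f P; map_mx f Q].
  apply/codiagonalizableP; split.
    have cPQ : comm_mx (map_mx f P) (map_mx f Q).
      by rewrite /comm_mx -!map_mxM; congr (map_mx f _); exact: PQ.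
    move=> A B; rewrite !inE => /orP [] /eqP -> /orP [] /eqP ->;
    by [apply: comm_mx_refl| apply: cPQ | apply: comm_mx_sym].
  move=> A; rewrite !inE => /orP [] /eqP ->.
    by exists V1.
  by exists V2.
have [V Vu /and3P [/= hP hQ _]] := cd.
have dPQ : diagonalizable (map_mx f (P + Q)).
  exists V => //; rewrite /similar_to map_mxD /conjmx mulmxDr mulmxDl.
  move/is_diag_mxP: hP => hP; move/is_diag_mxP: hQ => hQ.
  apply/is_diag_mxP => i j ij; rewrite mxE.
  by rewrite (hP _ _ ij) (hQ _ _ ij) addr0.
have [rs' urs' Hd] := (diagonalizableP _).1 dPQ.
rewrite -(separable_map f) -mxminpoly_map.
by apply: dvdp_separable Hd _; rewrite separable_prod_XsubC.
Qed.

Lemma lin1E (F : fieldType) n (f : 'rV[F]_n -> 'rV[F]_n)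
  (hf : forall (c : F) x y, f (c *: x + y) = c *: f x + f y) u :
  u *m lin1_mx f = f u.
Proof.
pose fL : {linear 'rV[F]_n -> 'rV[F]_n} := HB.pack f (GRing.isLinear.Build F _ _ _ f hf).
exact: (mul_rV_lin1 fL u).
Qed.

Section LinF.
Variables (F : fieldType) (U W : lmodType F) (f : U -> W).
Hypothesis hf : forall (c : F) x y, f (c *: x + y) = c *: f x + f y.
Lemma linD x y : f (x + y) = f x + f y.
Proof. by have := hf 1 x y; rewrite !scale1r. Qed.
Lemma lin0 : f 0 = 0.
Proof. by apply: (@addrI _ (f 0)); rewrite -linD !addr0. Qed.
Lemma linZ c x : f (c *: x) = c *: f x.
Proof. by have := hf c x 0; rewrite !addr0 lin0 addr0. Qed.
Lemma linN x : f (- x) = - f x.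
Proof. by rewrite -scaleN1r linZ scaleN1r. Qed.
Lemma linB x y : f (x - y) = f x - f y.
Proof. by rewrite linD linN. Qed.
End LinF.
Arguments linD {F U W f} hf x y.
Arguments lin0 {F U W f} hf.
Arguments linZ {F U W f} hf c x.
Arguments linN {F U W f} hf x.
Arguments linB {F U W f} hf x y.

Lemma rowext (F : fieldType) m n (A B : 'M[F]_(m, n)) :
  (forall u : 'rV_m, u *m A = u *m B) -> A = B.
Proof. by move=> H; apply/row_matrixP => i; rewrite !rowE H. Qed.

Lemma vecext (F : fieldType) m (A B : 'M[F]_(m * m)) :
  (forall X : 'M_m, mxvec X *m A = mxvec X *m B) -> A = B.
Proof. by move=> H; apply: rowext => u; rewrite -(vec_mxK u) H. Qed.

Section LR.
Variables (F : fieldType) (m : nat).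
Local Notation nn := m.+1.
Definition LM (X : 'M[F]_nn) : 'M[F]_(nn * nn) := lin_mulmx X.
Definition RM (X : 'M[F]_nn) : 'M[F]_(nn * nn) := lin_mulmxr X.

Lemma LME X Z : mxvec Z *m LM X = mxvec (X *m Z).
Proof. by rewrite /LM mul_vec_lin. Qed.
Lemma RME X Z : mxvec Z *m RM X = mxvec (Z *m X).
Proof. by rewrite /RM mul_vec_lin. Qed.

Lemma LM_mul X Y : LM X * LM Y = LM (Y *m X).
Proof. by apply: vecext => Z; rewrite mulmxA !LME mulmxA. Qed.
Lemma RM_mul X Y : RM X * RM Y = RM (X *m Y).
Proof. by apply: vecext => Z; rewrite mulmxA !RME mulmxA. Qed.
Lemma LR_comm X Y : LM X * RM Y = RM Y * LM X.
Proof. by apply: vecext => Z; rewrite !mulmxA LME RME RME LME mulmxA. Qed.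
Lemma LMD X Y : LM (X + Y) = LM X + LM Y.
Proof. by apply: vecext => Z; rewrite mulmxDr !LME mulmxDl linearD. Qed.
Lemma RMD X Y : RM (X + Y) = RM X + RM Y.
Proof. by apply: vecext => Z; rewrite mulmxDr !RME mulmxDr linearD. Qed.
Lemma LM0 : LM 0 = 0.
Proof. by apply: vecext => Z; rewrite LME mul0mx linear0 mulmx0. Qed.
Lemma RM0 : RM 0 = 0.
Proof. by apply: vecext => Z; rewrite RME mulmx0 linear0 mulmx0. Qed.

Lemma LM_scalar (c : F) : LM c%:M = c%:M.
Proof.
apply: (@vecext F nn) => Z; rewrite LME mul_scalar_mx mul_mx_scalar.
by rewrite linearZ.
Qed.
Lemma RM_scalar (c : F) : RM c%:M = c%:M.
Proof.
apply: (@vecext F nn) => Z; rewrite RME mul_mx_scalar mul_mx_scalar.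
by rewrite linearZ.
Qed.

Lemma LM_horner X p : horner_mx (LM X) p = LM (horner_mx X p).
Proof.
elim/poly_ind: p => [|p c IH]; first by rewrite !rmorph0 LM0.
apply: (@vecext F nn) => Z.
rewrite !rmorphD !rmorphM /= !horner_mx_X !horner_mx_C IH LM_mul.
rewrite LMD LM_scalar; congr (_ *m (LM _ + _)).
by have := comm_mx_horner p (comm_mx_refl X).
Qed.

Lemma RM_horner X p : horner_mx (RM X) p = RM (horner_mx X p).
Proof.
elim/poly_ind: p => [|p c IH]; first by rewrite !rmorph0 RM0.
apply: (@vecext F nn) => Z.
rewrite !rmorphD !rmorphM /= !horner_mx_X !horner_mx_C IH RM_mul.
by rewrite RMD RM_scalar.
Qed.
End LR.
Arguments LM {F m} X.
Arguments RM {F m} X.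
Arguments LME {F m} X Z.
Arguments RME {F m} X Z.
Arguments LM_mul {F m} X Y.
Arguments RM_mul {F m} X Y.
Arguments LR_comm {F m} X Y.
Arguments LMD {F m} X Y.
Arguments RMD {F m} X Y.
Arguments LM0 {F m}.
Arguments RM0 {F m}.
Arguments LM_horner {F m} X p.
Arguments RM_horner {F m} X p.

Lemma nil_sum (R : pzRingType) (A B : R) K : GRing.comm A B ->
  A ^+ K = 0 -> B ^+ K = 0 -> (A + B) ^+ (K + K) = 0.
Proof.
move=> AB hA hB; rewrite exprDn_comm //; apply: big1 => [[i /= hi]] _.
case: (leqP K i) => Ki.
  by rewrite -(subnKC Ki) exprD hB mul0r mulr0 mul0rn.
have : (K <= K + K - i)%N by rewrite -addnBA ?(ltnW Ki) // leq_addr.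
by move=> h; rewrite -(subnKC h) exprD hA mul0r mul0r mul0rn.
Qed.

Lemma zm1 (V : zmodType) (a b c d : V) : a - b = - (c - d) -> a + c = d + b.
Proof.
move=> h; have := congr1 (fun t => t + b + c) h => /=.
by rewrite subrK opprB addrAC subrK.
Qed.
Lemma zm2 (V : zmodType) (a b c d : V) : a + c = d + b -> a - b = - (c - d).
Proof. by move=> h; rewrite opprB; apply/eqP; rewrite subr_eq addrAC -h addrK. Qed.

Theorem lemma3p5 (F : fieldType) (n : nat)
    (mul : 'rV[F]_n.+1 -> 'rV[F]_n.+1 -> 'rV[F]_n.+1)
    (char0 : [pchar F] =i pred0)
    (Hbil : bilinear_mul mul) (Hunit : unital_mul mul)
    (a : 'rV[F]_n.+1) (Ha : LN_alt mul a)
    (S N : 'M[F]_n.+1)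
    (HJC : Lmx mul a = S + N) (HS : mx_semisimple S) (HN : mx_nilpotent N)
    (Hcomm : S *m N = N *m S) :
  exists as_ an : 'rV[F]_n.+1,
    [/\ LN_alt mul as_, LN_alt mul an, S = Lmx mul as_ & N = Lmx mul an].
Proof.
move: Hbil => [hl hr].
have [e He] := Hunit.
have mulLlin : forall c (c0 : F) x y, mul c (c0 *: x + y) = c0 *: mul c x + mul c y.
  by move=> c c0 x y; apply: hr.
have mulRlin : forall z (c0 : F) x y,
    (fun t => mul t z) (c0 *: x + y) = c0 *: (fun t => mul t z) x + (fun t => mul t z) y.
  by move=> z c0 x y; apply: hl.
have LE : forall c u, u *m Lmx mul c = mul c u.
  by move=> c u; apply: lin1E; apply: mulLlin.
have Llin : forall (c0 : F) x y, Lmx mul (c0 *: x + y) = c0 *: Lmx mul x + Lmx mul y.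
  move=> c0 x y; apply: rowext => u; rewrite LE mulmxDr -scalemxAr !LE; exact: hl.
have L1 : Lmx mul e = 1%:M by apply: rowext => u; rewrite LE mulmx1 (He u).1.
have eL : forall x, e *m Lmx mul x = x by move=> x; rewrite LE (He x).2.
have toM : forall c, LN_alt mul c -> forall x,
    Lmx mul (mul c x + mul x c) = Lmx mul c *m Lmx mul x + Lmx mul x *m Lmx mul c.
  move=> c Hc x; apply: rowext => u; rewrite LE mulmxDr !mulmxA !LE.
  rewrite (linD (mulRlin u)) /=; apply: zm1; exact: (Hc x u).
have toA : forall c, (forall x,
    Lmx mul (mul c x + mul x c) = Lmx mul c *m Lmx mul x + Lmx mul x *m Lmx mul c) ->
    LN_alt mul c.
  move=> c Hc x y; rewrite /assoc; apply: zm2.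
  have := congr1 (mulmx y) (Hc x); rewrite LE mulmxDr !mulmxA !LE.
  by rewrite (linD (mulRlin y)).
set T := Lmx mul a.
have cSN : GRing.comm S N by [].
have ssum : separable_poly (mxminpoly (LM S + RM S)).
  apply: (@ss_sum F (n + n * n.+1)%N (LM S) (RM S) _ _ (LR_comm S S) HS HS).
    by rewrite LM_horner mx_root_minpoly LM0.
  by rewrite RM_horner mx_root_minpoly RM0.
have [K NK] := HN.
have nilE : (LM N + RM N) ^+ (K + K) = 0.
  apply: nil_sum; first exact: LR_comm.
    by have := LM_horner N 'X^K; rewrite !rmorphXn /= !horner_mx_X NK LM0.
  by have := RM_horner N 'X^K; rewrite !rmorphXn /= !horner_mx_X NK RM0.
have cDE : GRing.comm (LM S + RM S) (LM N + RM N).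
  apply: commrD; apply: commr_sym; apply: commrD; apply: commr_sym.
  - by rewrite /GRing.comm !LM_mul Hcomm.
  - by rewrite /GRing.comm LR_comm.
  - by rewrite /GRing.comm LR_comm.
  - by rewrite /GRing.comm !RM_mul Hcomm.
have [q Hq] := @newton F (n + n * n.+1)%N _ _ cDE _ _ ssum (mx_root_minpoly _) nilE.
have JT : LM T + RM T = (LM S + RM S) + (LM N + RM N).
  by rewrite /T HJC LMD RMD addrACA.
pose inV (X : 'M[F]_n.+1) := X = Lmx mul (e *m X).
have inV_L : forall x, inV (Lmx mul x) by move=> x; rewrite /inV eL.
have inV_lin : forall (c : F) X Y, inV X -> inV Y -> inV (c *: X + Y).
  move=> c X Y hX hY; rewrite /inV mulmxDr -scalemxAr Llin.
  by rewrite -hX -hY.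
have inV0 : inV 0 by rewrite /inV mulmx0 (lin0 Llin).
have Jact : forall X, vec_mx (mxvec X *m (LM T + RM T)) = T *m X + X *m T.
  by move=> X; rewrite mulmxDr LME RME -linearD /= mxvecK.
have Jact' : forall w : 'rV_(n.+1 * n.+1),
    vec_mx (w *m (LM T + RM T)) = T *m vec_mx w + vec_mx w *m T.
  by move=> w; rewrite -Jact vec_mxK.
have inVJ : forall X, inV X -> inV (T *m X + X *m T).
  move=> X hX; set x := e *m X in hX; rewrite hX -toM //; apply: inV_L.
have inVpoly : forall p X, inV X -> inV (vec_mx ((mxvec X *m horner_mx (LM T + RM T) p) : 'rV_(n.+1 * n.+1))).
  move=> p; elim/poly_ind: p => [|p c IH] X hX.
    by rewrite rmorph0 mulmx0 linear0; apply: inV0.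
  rewrite rmorphD rmorphM /= horner_mx_X horner_mx_C mulmxDr mulmxA mul_mx_scalar.
  rewrite linearD /= linearZ /= mxvecK addrC; apply: inV_lin => //.
  by rewrite Jact'; apply: inVJ; apply: IH.
have SactE : forall X, vec_mx (mxvec X *m (horner_mx (LM T + RM T) q : 'M_(n.+1 * n.+1))) = S *m X + X *m S.
  by move=> X; rewrite JT Hq mulmxDr LME RME -linearD /= mxvecK.
have h1 : inV (S + S).
  have := inVpoly q 1%:M; rewrite SactE mulmx1 mul1mx; apply.
  by rewrite /inV mulmx1 L1.
have two : (2%:R : F) != 0 by rewrite ((pcharf0P F).1 char0 2).
have hS : inV S.
  have := inV_lin (2%:R^-1) _ _ h1 inV0.
  by rewrite addr0 -mulr2n -scaler_nat scalerA mulVf // scale1r.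
set s := e *m S in hS.
have LNs : forall x,
    Lmx mul (mul s x + mul x s) = Lmx mul s *m Lmx mul x + Lmx mul x *m Lmx mul s.
  move=> x; have hx := inVpoly q (Lmx mul x) (inV_L x).
  rewrite SactE in hx; rewrite -hS [RHS]hx; congr (Lmx mul _).
  rewrite mulmxDr !mulmxA eL /s LE -/s.
  by rewrite hS LE addrC.
have Ns : N = Lmx mul (a - s).
  by rewrite (linB Llin) -hS HJC addrAC subrr add0r.
exists s, (a - s); split => //; first exact: toA.
apply: toA => x.
have -> : mul (a - s) x = mul a x - mul s x by apply: (linB (mulRlin x)).
have -> : mul x (a - s) = mul x a - mul x s by apply: (linB (mulLlin x)).
rewrite addrACA -opprD (linB Llin) toM // LNs (linB Llin) -/T.
by rewrite mulmxBl mulmxBr addrACA opprD.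
Qed.
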